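(* Let $\langle E,\rightarrow\rangle$ be a computation and $b$ a regular predicate. The graph $S_b(E)$ has the same set of consistent cuts as the slice of $\langle E,\rightarrow\rangle$ with respect to $b$.
   Context: A computation is a directed graph $\langle E, \rightarrow\rangle$ whose vertices (events) are partitioned among processes $p_1,\dots,p_n$; events on each process are totally ordered, each process $p_i$ has an initial event $\bot_i$ (first) and final event $\top_i$ (last), the path relation contains Lamport's happened-before relation, all initial events lie in one strongly connected component and all final events in one strongly connected component. $\top$ is the set of final events and $\mathrm{succ}(e)$ the successor of $e$ on its process. A subset $C$ of the vertices of a directed graph is a consistent cut if for every edge $(u,v)$, $v\in C$ implies $u\in C$; $\emptyset,E$ are trivial. A predicate (evaluated on non-trivial consistent cuts) is regular if whenever consistent cuts $C_1,C_2$ satisfy it, so do $C_1\cap C_2$ and $C_1\cup C_2$. $J_b(e)$ is the least consistent cut of $\langle E,\rightarrow\rangle$ that satisfies $b$ and contains $e$, or $E$ if none exists or $e\in\top$. $F_b(e)[i]$ is the earliest event $g$ on $p_i$ with $J_b(e)\subseteq J_b(g)$. $S_b(E)$ has vertex set $E$ and edges from each $e\notin\top$ to $\mathrm{succ}(e)$ and from each $e$ to $F_b(e)[i]$ for every $i$. The slice of $\langle E,\rightarrow\rangle$ with respect to $b$ is a directed graph on $E$ whose consistent cuts include every consistent cut of $\langle E,\rightarrow\rangle$ satisfying $b$ and which has the fewest consistent cuts among all such graphs. *)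

(* Defs.v *)
From mathcomp Require Import all_boot.

Set Implicit Arguments.
Unset Strict Implicit.
Unset Printing Implicit Defensive.

(* Raw data of a computation: a finite set of events [ev], a directed graph
   [edge] on it, the messages [msg] of the underlying distributed computation
   (used only to define Lamport's happened-before), the process [proc e] of each
   event and, for each process, the sequence [procseq i] of its events in
   process order. *)
Record computation := Computation {
  ev : finType;
  nproc : nat;
  edge : rel ev;
  msg : rel ev;
  proc : ev -> 'I_nproc;
  procseq : 'I_nproc -> seq ev }.
Arguments edge : clear implicits.
Arguments msg : clear implicits.
Arguments proc : clear implicits.
Arguments procseq : clear implicits.
Arguments nproc : clear implicits.

Section Slicing.
Variable G : computation.
Local Notation T := (ev G).

Definition pos (e : T) : nat := index e (procseq G (proc G e)).
Definition is_init (e : T) : bool := pos e == 0.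
Definition is_final (e : T) : bool := pos e == (size (procseq G (proc G e))).-1.
Definition top : {set T} := [set e | is_final e].
Definition succ (e : T) : T := nth e (procseq G (proc G e)) (pos e).+1.
Definition proc_step (e f : T) : bool := ~~ is_final e && (f == succ e).

Definition tpath (r : rel T) (x y : T) : bool := [exists z, r x z && connect r z y].
Definition happened_before : rel T :=
  tpath (fun x y => proc_step x y || msg G x y).

Definition is_computation : Prop :=
  [/\ (forall i, uniq (procseq G i) /\ procseq G i != [::]),
      (forall e i, (e \in procseq G i) = (proc G e == i)),
      (forall e f, happened_before e f -> connect (edge G) e f),
      (forall e f, is_init e -> is_init f -> connect (edge G) e f) &
      (forall e f, is_final e -> is_final f -> connect (edge G) e f)].

Definition consistent (r : rel T) (C : {set T}) : bool :=
  [forall u, forall v, r u v ==> (v \in C) ==> (u \in C)].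
Definition cuts (r : rel T) : {set {set T}} := [set C | consistent r C].

Variable b : {set T} -> bool.

Definition sat (C : {set T}) : bool :=
  [&& consistent (edge G) C, C != set0, C != setT & b C].

Definition regular : Prop :=
  forall C1 C2, sat C1 -> sat C2 -> sat (C1 :&: C2) /\ sat (C1 :|: C2).

Definition J (e : T) : {set T} :=
  if is_final e then setT
  else odflt setT [pick C | [&& sat C, e \in C &
                    [forall D, (sat D && (e \in D)) ==> (C \subset D)]]].

Definition F (e : T) (i : 'I_(nproc G)) : T :=
  nth e (procseq G i) (find (fun g => J e \subset J g) (procseq G i)).

Definition S_edge : rel T :=
  fun u v => proc_step u v || [exists i, v == F u i].

Definition covers_sat (r : rel T) : Prop := forall C, sat C -> consistent r C.

Definition is_slice (r : rel T) : Prop :=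
  covers_sat r /\ (forall r', covers_sat r' -> #|cuts r| <= #|cuts r'|).

End Slicing.

(* Main.v *)
Require Import Defs.
From mathcomp Require Import all_boot.
Set Implicit Arguments.
Unset Strict Implicit.

Section Proof9.
Variable G : computation.
Variable b : {set ev G} -> bool.
Hypothesis hc : is_computation G.
Hypothesis hreg : regular b.
Local Notation T := (ev G).

Lemma conn_closed (C : {set T}) u v :
  consistent (edge G) C -> connect (edge G) u v -> v \in C -> u \in C.
Proof.
move=> /forallP H /connectP [p pth ->].
elim: p u pth => [|w p IH] u //= /andP[e pth] Hl.
have := IH w pth Hl.
by move: (forallP (H u) w) => /implyP /(_ e) /implyP.
Qed.

Lemma mem_proc (e : T) : e \in procseq G (proc G e).
Proof. by case: hc => _ H _ _ _; rewrite H. Qed.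

Lemma proc_nth j k x0 : k < size (procseq G j) -> proc G (nth x0 (procseq G j) k) = j.
Proof.
move=> hk; case: hc => _ H _ _ _.
by apply/eqP; rewrite -H mem_nth.
Qed.

Lemma pos_nth j k x0 : k < size (procseq G j) -> pos (nth x0 (procseq G j) k) = k.
Proof.
move=> hk; rewrite /pos proc_nth //; apply: index_uniq => //.
by case: hc => H _ _ _ _; case: (H j).
Qed.

Lemma step_nth j k x0 : k.+1 < size (procseq G j) ->
  proc_step (nth x0 (procseq G j) k) (nth x0 (procseq G j) k.+1).
Proof.
move=> hk; have hk' : k < size (procseq G j) by apply: ltnW.
rewrite /proc_step /is_final /succ pos_nth // proc_nth //.
apply/andP; split.
  by apply/eqP => E; move: hk; rewrite E; case: (size _) hk' => //= n _; rewrite ltnn.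
by rewrite (set_nth_default x0).
Qed.

Lemma down (C : {set T}) j x0 k l :
  (forall u v, proc_step u v -> v \in C -> u \in C) ->
  k <= l -> l < size (procseq G j) ->
  nth x0 (procseq G j) l \in C -> nth x0 (procseq G j) k \in C.
Proof.
move=> P; elim: l => [|l IH] hkl hl hin.
  by move: hkl; rewrite leqn0 => /eqP ->.
case: (eqVneq k l.+1) => [-> //|ne].
have hkl' : k <= l by rewrite -ltnS ltn_neqAle ne.
apply: IH => //; first by apply: ltnW.
exact: (P _ _ (step_nth x0 hl) hin).
Qed.

Lemma hb_step u v : proc_step u v -> connect (edge G) u v.
Proof.
move=> h; case: hc => _ _ H _ _; apply: H.
by apply/existsP; exists v; rewrite h connect0.
Qed.

Lemma final_not_sat (C : {set T}) g : sat b C -> is_final g -> g \in C -> False.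
Proof.
move=> /and4P[cC n0 nT _] fg gC.
move/negP: nT; apply; apply/eqP/setP => e; rewrite inE.
set s := procseq G (proc G e).
have es := mem_proc e.
have hs : 0 < size s by move: es; rewrite /s; case: (procseq _ _).
have hl : (size s).-1 < size s by rewrite prednK.
have fin : is_final (nth e s (size s).-1).
  by rewrite /is_final pos_nth // proc_nth.
have : nth e s (size s).-1 \in C.
  apply: conn_closed cC _ gC; case: hc => _ _ _ _ H; exact: H.
move=> H; have := @down C (proc G e) e (pos e) (size s).-1 (fun u v h => conn_closed cC (hb_step h)) _ hl H.
rewrite /pos nth_index //; apply.
by rewrite -ltnS prednK // index_mem.
Qed.

Lemma least_exists (e : T) D0 : sat b D0 -> e \in D0 ->
  exists C, [&& sat b C, e \in C &
     [forall D, (sat b D && (e \in D)) ==> (C \subset D)]].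
Proof.
move=> s0 e0.
have P0 : sat b D0 && (e \in D0) by rewrite s0 e0.
case: (@arg_minnP _ D0 (fun D => sat b D && (e \in D)) (fun D : {set T} => #|D|) P0) => D /andP[sD eD] Hmin.
exists D; rewrite sD eD /=; apply/forallP => D'; apply/implyP => /andP[sD' eD'].
have [sI _] := hreg sD sD'.
have : sat b (D :&: D') && (e \in D :&: D') by rewrite sI inE eD eD'.
move/Hmin => hc'.
have : D :&: D' == D by rewrite eqEcard subsetIl hc'.
by move/eqP/setIidPl.
Qed.

Lemma Jmin (e : T) D : sat b D -> e \in D -> J b e \subset D.
Proof.
move=> sD eD; rewrite /J.
case fe: (is_final e); first by case: (final_not_sat sD fe eD).
case: pickP => [C /and3P[_ _ /forallP H] | none] /=.
  by move/implyP: (H D); apply; rewrite sD eD.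
by case: (least_exists sD eD) => C; rewrite none.
Qed.

Lemma Jprop (e : T) : J b e = setT \/ (sat b (J b e) /\ e \in J b e).
Proof.
rewrite /J; case: (is_final e); first by left.
case: pickP => [C /and3P[sC eC _] | _] /=; [by right | by left].
Qed.

Lemma Jin (e : T) : e \in J b e.
Proof. by case: (Jprop e) => [->|[]]; rewrite ?inE. Qed.

Lemma key (C : {set T}) g f : consistent (S_edge b) C -> g \in C ->
  J b f \subset J b g -> f \in C.
Proof.
move=> cC gC Hfg.
have cl : forall u v, S_edge b u v -> v \in C -> u \in C.
  move=> u v h; move/forallP: cC => /(_ u) /forallP /(_ v) /implyP /(_ h) /implyP; exact.
set j := proc G g; set s := procseq G j.
set P := fun x => J b f \subset J b x.
have gs : g \in s := mem_proc g.
have hasP : has P s by apply/hasP; exists g.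
have hk : find P s <= index g s.
  rewrite leqNgt; apply/negP => /(before_find g); rewrite nth_index //.
  by rewrite /P Hfg.
have hin : nth f s (find P s) \in C.
  have := @down C j f (find P s) (index g s) (fun u v h => cl u v (introT orP (or_introl h))) hk.
  rewrite nth_index //; apply => //; by rewrite index_mem.
apply: (cl f (nth f s (find P s))) hin.
by apply/orP; right; apply/existsP; exists j.
Qed.

Lemma dir1 (C : {set T}) : sat b C -> consistent (S_edge b) C.
Proof.
move=> sC; have cC : consistent (edge G) C by case/and4P: sC.
apply/forallP=> u; apply/forallP => v; apply/implyP => /orP[ps|/existsP[i /eqP->]] /=;
  apply/implyP => vin.
  exact: conn_closed cC (hb_step ps) vin.
set s := procseq G i; set P := fun g => J b u \subset J b g.
case: (ltnP (find P s) (size s)) => h.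
  have : P (nth u s (find P s)) by apply: nth_find; rewrite has_find.
  move: vin; rewrite /F -/s -/P => vin Hs.
  have := subset_trans Hs (Jmin sC vin).
  by move/subsetP; apply; apply: Jin.
by move: vin; rewrite /F -/s -/P nth_default.
Qed.

Lemma sat_big (s : seq T) : s != [::] -> (forall g, g \in s -> sat b (J b g)) ->
  sat b (\bigcup_(g <- s) J b g).
Proof.
elim: s => [//|x s IH] _ H.
rewrite big_cons.
case: (eqVneq s [::]) => [->|ne].
  by rewrite big_nil setU0; apply: H; rewrite inE eqxx.
have := hreg (H x (mem_head _ _)) (IH ne (fun g gs => H g (mem_behead (s:=x :: s) gs))).
by case.
Qed.

Lemma dir2 (C : {set T}) : consistent (S_edge b) C -> C != set0 -> C != setT -> sat b C.
Proof.
move=> cC n0 nT.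
have allJ : forall g, g \in C -> sat b (J b g) /\ J b g \subset C.
  move=> g gC; case: (Jprop g) => [E|[sJ _]].
    move/negP: nT; case; apply/eqP/setP => f; rewrite inE.
    by apply: (key cC gC); rewrite E subsetT.
  split => //; apply/subsetP => f fJ.
  by apply: (key cC gC); apply: Jmin.
have -> : C = \bigcup_(g <- enum C) J b g.
  apply/setP => x; rewrite big_enum; apply/idP/bigcupP.
    by move=> xC; exists x => //; apply: Jin.
  by case=> g gC xJ; move/subsetP: (proj2 (allJ g gC)); apply.
apply: sat_big.
  case/set0Pn: n0 => x xC; apply/eqP => E.
  by move: (mem_enum (mem C) x); rewrite E xC.
by move=> g; rewrite mem_enum => gC; case: (allJ g gC).
Qed.

End Proof9.

Theorem theorem9 (G : computation) (b : {set ev G} -> bool) :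
  is_computation G -> regular b ->
  forall r : rel (ev G), is_slice b r -> cuts (S_edge b) = cuts r.
Proof.
move=> hc hreg r [cov minr].
set L := [set C : {set ev G} | [|| C == set0, C == setT | sat b C]].
have cons0 : forall rr : rel (ev G), consistent rr set0.
  by move=> rr; apply/forallP => u; apply/forallP => v; rewrite inE; case: (rr u v).
have consT : forall rr : rel (ev G), consistent rr setT.
  by move=> rr; apply/forallP => u; apply/forallP => v; rewrite !inE; case: (rr u v).
have HS : cuts (S_edge b) = L.
  apply/setP => C; rewrite !inE; apply/idP/idP.
    move=> cC; case: (eqVneq C set0) => //= n0; case: (eqVneq C setT) => //= nT.
    have := @dir2 G b hc hreg C cC n0 nT; exact.
  case/or3P => [/eqP->|/eqP->|sC] //; exact: (@dir1 G b hc hreg C sC).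
have sub : L \subset cuts r.
  apply/subsetP => C; rewrite !inE; case/or3P => [/eqP->|/eqP->|sC] //; exact: cov.
have covS : covers_sat b (S_edge b) by move=> C sC; exact: (@dir1 G b hc hreg C sC).
have le := minr _ covS.
rewrite HS; apply/eqP; rewrite eqEcard sub -HS //.
Qed.
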